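(* Let $X$ be a connected, non-bipartite strongly regular graph with parameters $(n,k,a,c)$, $k\ge3$, $k>c\ge1$, whose adjacency matrix has the integer eigenvalue $e=\lambda_1$, the larger root of $\lambda^2-(a-c)\lambda-(k-c)=0$. Suppose $c=e(e+1)$ and $e>a$. Then for every vertex $v$ of $X$, the closed neighbourhood $N=\{v\}\cup X_1(v)$ (the subgraph induced by $v$ together with its neighbours) is a star complement for $e$ in $X$.
   Context: A strongly regular graph with parameters $(n,k,a,c)$ has $n$ vertices, degree $k$, every two adjacent vertices have $a$ common neighbours and every two distinct non-adjacent vertices have $c$ common neighbours. If $e$ is an eigenvalue of $X$ with multiplicity $m$, a star complement for $e$ in $X$ is an induced subgraph on $n-m$ vertices that does not have $e$ as an eigenvalue. $X_1(v)$ denotes the set of neighbours of $v$. *)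

(* Defs.v *)
From mathcomp Require Import all_boot all_order all_algebra all_field.
Set Implicit Arguments. Unset Strict Implicit. Unset Printing Implicit Defensive.
Import Order.TTheory GRing.Theory Num.Theory.
Local Open Scope ring_scope.

Definition simple_graph n (adj : rel 'I_n) : Prop :=
  symmetric adj /\ irreflexive adj.

Definition nbhd n (adj : rel 'I_n) (v : 'I_n) : {set 'I_n} := [set w | adj v w].

Definition srg n (adj : rel 'I_n) (k a c : nat) : Prop :=
  simple_graph adj /\
  (forall v, #|nbhd adj v| = k) /\
  (forall x y, x != y -> adj x y -> #|nbhd adj x :&: nbhd adj y| = a) /\
  (forall x y, x != y -> ~~ adj x y -> #|nbhd adj x :&: nbhd adj y| = c).

Definition connected_graph n (adj : rel 'I_n) : Prop :=
  forall x y, connect adj x y.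

Definition bipartite n (adj : rel 'I_n) : Prop :=
  exists f : 'I_n -> bool, forall x y, adj x y -> f x != f y.

Definition adjmx n (adj : rel 'I_n) : 'M[algC]_n :=
  \matrix_(i, j) (adj i j)%:R.

Definition induced_adjmx n (adj : rel 'I_n) (S : {set 'I_n}) : 'M[algC]_#|S| :=
  \matrix_(i, j) (adj (enum_val i) (enum_val j))%:R.

(* multiplicity of the eigenvalue e of a (symmetric, hence diagonalizable)
   matrix: dimension of its eigenspace *)
Definition eig_mult m (A : 'M[algC]_m) (e : algC) : nat := \rank (eigenspace A e).

Definition star_complement n (adj : rel 'I_n) (e : algC) (S : {set 'I_n}) : Prop :=
  #|S| = (n - eig_mult (adjmx adj) e)%N /\ ~~ eigenvalue (induced_adjmx adj S) e.

(* Main.v *)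
Require Import Defs.
From mathcomp Require Import all_boot all_order all_algebra all_field.
From mathcomp Require Import ring zify.
Import Order.TTheory GRing.Theory Num.Theory.
Local Open Scope ring_scope.
Lemma sum_card n (A : {set 'I_n}) :
  \sum_z ((z \in A)%:R : algC) = #|A|%:R.
Proof.
rewrite -sum1_card natr_sum [RHS]big_mkcond /=.
by apply: eq_bigr => z _; case: (z \in A).
Qed.

Lemma adj_sq n (adj : rel 'I_n) k a c : srg adj k a c ->
  adjmx adj *m adjmx adj =
  (k%:R - c%:R) *: 1%:M + (a%:R - c%:R) *: adjmx adj + (c%:R : algC) *: const_mx 1.
Proof.
move=> [[sym irr] [hk [ha hc]]]; apply/matrixP => x y; rewrite !mxE.
have -> : \sum_j adjmx adj x j * adjmx adj j y =
   \sum_j ((j \in nbhd adj x :&: nbhd adj y))%:R.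
  apply: eq_bigr => z _; rewrite !mxE inE !inE (sym z y).
  by case: (adj x z); case: (adj y z); rewrite ?mulr0 ?mulr1.
rewrite sum_card.
have [->|nxy] := eqVneq x y.
  rewrite setIid hk irr /= !mulr1 mulr0 addr0.
  by rewrite subrK.
rewrite /= mulr0 add0r mulr1.
case hxy: (adj x y).
  by rewrite (ha _ _ nxy hxy) mulr1 subrK.
by rewrite (hc _ _ nxy (negbT hxy)) mulr0 add0r.
Qed.
Lemma adjJ n (adj : rel 'I_n) k a c : srg adj k a c ->
  adjmx adj *m const_mx 1 = (k%:R : algC) *: const_mx 1 :> 'M_n.
Proof.
move=> [[sym irr] [hk _]]; apply/matrixP => x y; rewrite !mxE mulr1 -(hk x) -sum_card.
by apply: eq_bigr => z _; rewrite !mxE mulr1 inE.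
Qed.

Lemma Jadj n (adj : rel 'I_n) k a c : srg adj k a c ->
  const_mx 1 *m adjmx adj = (k%:R : algC) *: const_mx 1 :> 'M_n.
Proof.
move=> [[sym irr] [hk _]]; apply/matrixP => x y; rewrite !mxE mulr1 -(hk y) -sum_card.
by apply: eq_bigr => z _; rewrite !mxE mul1r inE sym.
Qed.

Lemma tr_adj n (adj : rel 'I_n) k a c : srg adj k a c -> \tr (adjmx adj) = 0.
Proof.
move=> [[sym irr] _]; rewrite /mxtrace big1 // => i _; by rewrite mxE irr.
Qed.

Lemma JJ n : (const_mx 1 : 'M_n) *m (const_mx 1 : 'M_n) = (n%:R : algC) *: const_mx 1 :> 'M_n.
Proof.
apply/matrixP => x y; rewrite !mxE mulr1 -[X in X%:R]card_ord -sum1_card natr_sum.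
by apply: eq_bigr => z _; rewrite !mxE mulr1.
Qed.
Lemma mulBB n (A : 'M[algC]_n) x y :
  (A - x%:M) *m (A - y%:M) = A *m A - (x + y) *: A + (x*y)%:M.
Proof.
rewrite mulmxBl !mulmxBr mul_mx_scalar mul_scalar_mx mul_scalar_mx scale_scalar_mx.
rewrite scalerDl !opprD ?opprK !addrA; congr (_ + _).
by rewrite addrAC.
Qed.

Lemma eigen_mul m n (K : 'M[algC]_(m,n)) A r x :
  K *m A = r *: K -> K *m (A - x%:M) = (r - x) *: K.
Proof. by move=> h; rewrite mulmxBr h mul_mx_scalar scalerBl. Qed.

Lemma tr_pid n r : (r <= n)%N -> \tr (pid_mx r : 'M[algC]_n) = r%:R.
Proof.
move=> rn; rewrite /mxtrace.
under eq_bigr => i _ do rewrite mxE eqxx /=.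
rewrite -(big_mkord xpredT (fun i => (i < r)%N%:R)) (big_cat_nat (n:=r) (leq0n r) rn) /=.
rewrite [X in _ + X]big1_seq ?addr0 => [|i]; last first.
  by move=> /andP[_]; rewrite mem_index_iota => /andP[h _]; rewrite ltnNge h.
rewrite big_nat_cond (eq_bigr (fun _ => 1)) => [|i]; last by rewrite andbT => /andP[_ ->].
by rewrite -big_nat_cond sumr_const_nat subn0.
Qed.

Lemma tr_idem n (E : 'M[algC]_n) : E *m E = E -> \tr E = (\rank E)%:R.
Proof.
move=> hE; have dE := mulmx_ebase E.
set L := col_ebase E in dE; set U := row_ebase E in dE; set P := pid_mx _ in dE.
have uL : L \in unitmx by apply: col_ebase_unit.
have uU : U \in unitmx by apply: row_ebase_unit.
have hP : P *m (U *m L) *m P = P.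
  have := congr1 (fun X => invmx L *m X *m invmx U) hE.
  rewrite -dE /=.
  rewrite -!mulmxA mulKmx // !mulmxA mulmxK //.
  rewrite -!mulmxA mulKmx // !mulmxA mulmxK //.
rewrite -[in LHS]dE mxtrace_mulC mulmxA mxtrace_mulC.
have PP : P *m P = P by rewrite pid_mx_id // rank_leq_row.
rewrite -{1}PP -mulmxA mxtrace_mulC hP.
by rewrite tr_pid // rank_leq_row.
Qed.
Lemma alg_id (r s A K C N : algC) : C = r*(r+1) -> A - C = r + s -> K - C = - (r*s) ->
  K^+2 = (K - C) + (A - C) * K + C * N -> C != 0 -> r - s != 0 -> r - K != 0 ->
  (K * N + s * K * N) / ((r - s) * (r - K)) = N - K - 1.
Proof.
move=> hC hA hK hN C0 rs rk.
have eN : N = (K^+2 - (K - C) - (A - C) * K) / C.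
  by rewrite hN; field.
have eK : K = r * (r+1) - r * s by rewrite -hC -hK; ring.
rewrite eN hA; rewrite hC in C0 *; rewrite eK in rk *.
field; move: C0; rewrite mulf_eq0 negb_or => /andP[-> ->]; by rewrite rk rs.
Qed.

Lemma mult_part n (adj : rel 'I_n) k a c (r : algC) (v : 'I_n) :
  srg adj k a c -> (k.+1 <= n)%N ->
  r^+2 - (a%:R - c%:R) * r - (k%:R - c%:R) = 0 ->
  c%:R = r * (r+1) -> (c != 0)%N -> (k != 0)%N -> (a%:R - c%:R) - r != r -> r != k%:R ->
  eig_mult (adjmx adj) r = (n - k.+1)%N.
Proof.
move=> G kn eq1 hc c0 k0 rs rk.
set A := adjmx adj; set s := (a%:R - c%:R) - r.
set J := (const_mx 1 : 'M[algC]_n).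
have hsq := adj_sq _ _ _ _ _ G; have hAJ := adjJ _ _ _ _ _ G; have hJA := Jadj _ _ _ _ _ G; have htr := tr_adj _ _ _ _ _ G.
have sr : s * r = c%:R - k%:R.
  have h : s * r - (c%:R - k%:R) = - (r^+2 - (a%:R - c%:R) * r - (k%:R - c%:R)) by rewrite /s; ring.
  by apply/eqP; rewrite -subr_eq0 h eq1 oppr0.
have e13 : (A - s%:M) *m (A - r%:M) = c%:R *: J.
  rewrite mulBB hsq sr; apply/matrixP => i j; rewrite !mxE /s -mulr_natr; ring.
have e2 : J *m (A - k%:R%:M) = 0.
  by rewrite mulmxBr hJA mul_mx_scalar subrr.
have e23 : (A - k%:R%:M) *m (A - r%:M) = (A - r%:M) *m (A - k%:R%:M).
  by rewrite !mulBB [k%:R + r]addrC [k%:R * r]mulrC.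
set E0 := (A - s%:M) *m (A - k%:R%:M).
have eE3 : E0 *m (A - r%:M) = 0.
  by rewrite /E0 -mulmxA e23 mulmxA e13 -scalemxAl e2 scaler0.
have eEA : E0 *m A = r *: E0.
  by apply/eqP; rewrite -subr_eq0 -mul_mx_scalar -mulmxBr eE3.
set d := (r - s) * (r - k%:R).
have d0 : d != 0.
  by rewrite mulf_neq0 // subr_eq0 // eq_sym.
have hK : forall m (K : 'M_(m, n)), K *m A = r *: K -> K *m E0 = d *: K.
  move=> m K hK; rewrite /E0 mulmxA (eigen_mul _ _ _ _ _ _ hK) -scalemxAl (eigen_mul _ _ _ _ _ _ hK).
  by rewrite scalerA.
set K := eigenspace A r.
have KA : K *m A = r *: K by apply/eigenspaceP; rewrite submx_refl.
have rkE : \rank K = \rank E0.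
  apply/eqP; rewrite eqn_leq; apply/andP; split; apply: mxrankS.
    have -> : K = d^-1 *: (K *m E0) by rewrite hK // scalerA mulVf // scale1r.
    by rewrite scalemx_sub // submxMl.
  by apply/eigenspaceP.
set E := d^-1 *: E0.
have EE : E *m E = E.
  by rewrite /E -scalemxAl -scalemxAr hK // !scalerA divfK.
have rE : \rank E = \rank E0 by rewrite /E mxrank_scale_nz // invr_eq0.
have trE := tr_idem _ _ EE.
rewrite /eig_mult -/K rkE -rE.
have trJ : \tr J = n%:R.
  by rewrite /mxtrace (eq_bigr (fun _ => 1)) ?sumr_const ?card_ord // => i _; rewrite mxE.
have trE0 : \tr E0 = k%:R * n%:R + s * k%:R * n%:R.
  rewrite /E0 mulBB hsq !mxtraceD !mxtraceZ raddfN /= mxtraceZ htr trJ !mxtrace_scalar.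
  rewrite -mulr_natr; ring.
have hN : k%:R ^+ 2 = (k%:R - c%:R) + (a%:R - c%:R) * k%:R + c%:R * n%:R :> algC.
  have h1 := congr1 (fun M => M *m J) hsq.
  rewrite /= -mulmxA hAJ -scalemxAr hAJ scalerA !mulmxDl -!scalemxAl mul1mx hAJ JJ in h1.
  have := congr1 (fun M : 'M[algC]_n => M v v) h1; rewrite !mxE /=.
  by rewrite !mulr1 expr2 => ->.
have key := alg_id r s a%:R k%:R c%:R n%:R hc.
apply/eqP; rewrite -(eqr_nat algC) -trE /E mxtraceZ trE0 natrB //.
rewrite mulrC key //.
- by rewrite -addn1 natrD opprD addrA.
- by rewrite /s; ring.
- by rewrite mulrC sr opprB.
- by rewrite pnatr_eq0.
- by rewrite subr_eq0 eq_sym.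
- by rewrite subr_eq0.
Qed.

Lemma induced_part n (adj : rel 'I_n) k a c (r : algC) (v : 'I_n) :
  srg adj k a c -> a%:R < r -> (r - a%:R) * r != k%:R ->
  ~~ eigenvalue (induced_adjmx adj (v |: nbhd adj v)) r.
Proof.
move=> [[sym irr] [hk [ha hc]]] ar hrk.
set S := v |: nbhd adj v.
have Sv : v \in S by rewrite setU11.
have inS : forall w, (w \in S) = (w == v) || adj v w by move=> w; rewrite !inE.
apply/eigenvalueP => -[u hu u0].
pose h z := if z \in S then u 0 (enum_rank_in Sv z) else 0.
have hu_i : forall i, u 0 i = h (enum_val i).
  by move=> i; rewrite /h enum_valP enum_valK_in.
have h0 : forall w, w != v -> ~~ adj v w -> h w = 0.
  by move=> w wv nw; rewrite /h inS (negbTE wv) (negbTE nw).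
have Ez : forall z, z \in S -> \sum_w h w * (adj w z)%:R = r * h z.
  move=> z zS.
  have := congr1 (fun M : 'rV_#|S| => M 0 (enum_rank_in Sv z)) hu; rewrite !mxE.
  have hz : u 0 (enum_rank_in Sv z) = h z by rewrite /h zS.
  rewrite hz => <-; apply/esym.
  under eq_bigr => j _ do rewrite !mxE enum_rankK_in // hu_i.
  rewrite -(big_enum_val (A := pred_of_set S) (fun w => h w * (adj w z)%:R)) /= big_mkcond /=.
  apply: eq_bigr => w _; rewrite /h; by case: (w \in S); rewrite ?mul0r.
have L1 : forall w, w != v -> forall y : algC, (h w = 0 -> y = 0) -> (adj v w)%:R * y = y.
  move=> w wv y hy; case e: (adj v w); first by rewrite mul1r.
  by rewrite mul0r hy // h0 // e.
have G34 : forall g : 'I_n -> algC, (forall w, w != v -> ~~ adj v w -> g w = 0) ->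
    \sum_z (adj v z)%:R * \sum_w g w * (adj w z)%:R =
    k%:R * g v + a%:R * \sum_(w | w != v) g w.
  move=> g hg.
  under eq_bigr => z _ do rewrite mulr_sumr.
  rewrite exchange_big /=.
  have -> : \sum_w \sum_z (adj v z)%:R * (g w * (adj w z)%:R) =
            \sum_w g w * (#|nbhd adj v :&: nbhd adj w|)%:R.
    apply: eq_bigr => w _; rewrite -sum_card mulr_sumr; apply: eq_bigr => z _.
    rewrite !inE; case: (adj v z); case: (adj w z); rewrite /= ?mulr0 ?mul0r ?mulr1 ?mul1r //.
  rewrite (bigD1 v) //= setIid hk mulrC mulr_sumr; congr (_ + _); apply: eq_bigr => w wv.
  case e: (adj v w).
    by rewrite ha 1?eq_sym // mulrC.
  by rewrite hg ?e // !mul0r mulr0.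
set Sy := \sum_(w | w != v) h w.
have F1 : \sum_w h w * (adj w v)%:R = Sy.
  rewrite (bigD1 v) //= irr mulr0 add0r; apply: eq_bigr => w wv.
  by rewrite sym mulrC (L1 w wv (h w)).
have F2 : \sum_z (adj v z)%:R * (r * h z) = r * Sy.
  rewrite (bigD1 v) //= irr mul0r add0r mulr_sumr; apply: eq_bigr => z zv.
  by rewrite L1 // => ->; rewrite mulr0.
have F3 : \sum_z (adj v z)%:R * (r * h z) = k%:R * h v + a%:R * Sy.
  rewrite -G34 //; apply: eq_bigr => z _; case e: (adj v z); last by rewrite !mul0r.
  by rewrite Ez // inS e orbT.
have hv0 : h v = 0.
  have e1 : r * Sy = k%:R * h v + a%:R * Sy by rewrite -F2 F3.
  have e2 : Sy = r * h v by rewrite -F1 Ez.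
  rewrite e2 in e1.
  have : ((r - a%:R) * r - k%:R) * h v = 0.
    have -> : ((r - a%:R) * r - k%:R) * h v = r * (r * h v) - (k%:R * h v + a%:R * (r * h v)) by ring.
    by rewrite e1 subrr.
  by move/eqP; rewrite mulf_eq0 subr_eq0 (negbTE hrk) /= => /eqP.
have rpos : 0 < r by apply: le_lt_trans ar.
set T := \sum_(w | w != v) `|h w|.
have T0 : 0 <= T by apply: sumr_ge0 => w _.
have rT : r * T <= a%:R * T.
  have -> : a%:R * T = k%:R * `|h v| + a%:R * T by rewrite hv0 normr0 mulr0 add0r.
  rewrite -G34; last by move=> w wv nw; rewrite h0 // normr0.
  rewrite (bigD1 v) //= irr mul0r add0r mulr_sumr; apply: ler_sum => z zv.
  case e: (adj v z); last by rewrite h0 ?e // normr0 mulr0 mul0r.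
  rewrite mul1r -(gtr0_norm rpos) -normrM -Ez ?inS ?e ?orbT //.
  apply: le_trans (ler_norm_sum _ _ _) _; apply: ler_sum => w _.
  by rewrite normrM normr_nat.
have Tz : T = 0.
  apply/eqP; rewrite eq_le T0 andbT.
  have : (r - a%:R) * T <= 0 by rewrite mulrBl subr_le0.
  by rewrite pmulr_rle0 // subr_gt0.
have hz : forall w, h w = 0.
  move=> w; have [->//|wv] := eqVneq w v.
  apply/normr0_eq0; exact: (psumr_eq0P (fun i _ => normr_ge0 (h i)) Tz).
apply: (negP u0); apply/eqP/rowP => i; by rewrite mxE hu_i hz.
Qed.

Theorem theorem6p1 (n : nat) (adj : rel 'I_n) (k a c : nat) (e : int) :
  srg adj k a c ->
  connected_graph adj ->
  ~ bipartite adj ->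
  (3 <= k)%N -> (c < k)%N -> (1 <= c)%N ->
  eigenvalue (adjmx adj) (e%:~R) ->
  e ^+ 2 - (a%:Z - c%:Z) * e - (k%:Z - c%:Z) = 0 ->
  (a%:Z - c%:Z) - e < e ->
  c%:Z = e * (e + 1) ->
  a%:Z < e ->
  forall v : 'I_n, star_complement adj (e%:~R) (v |: nbhd adj v).
Proof.
move=> G _ _ k3 ck c1 _ eq1 rs hce ae v.
set r : algC := e%:~R.
have nat_int : forall m : nat, ((m%:Z)%:~R : algC) = m%:R by move=> m; rewrite pmulrn.
have eq1' : r^+2 - (a%:R - c%:R) * r - (k%:R - c%:R) = 0.
  have := congr1 (fun x : int => (x%:~R : algC)) eq1.
  by rewrite /= !rmorphB /= !rmorphM /= !rmorphB /= !nat_int expr2 rmorph0.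
have hc : c%:R = r * (r + 1) :> algC.
  have := congr1 (fun x : int => (x%:~R : algC)) hce.
  by rewrite /= rmorphM /= rmorphD /= nat_int.
have c0 : c != 0%N by rewrite -lt0n.
have k0 : k != 0%N by rewrite -lt0n (leq_trans _ k3).
have rs' : (a%:R - c%:R) - r != r.
  have : ((a%:Z - c%:Z - e)%:~R : algC) < r by rewrite ltr_int.
  by rewrite !rmorphB /= !nat_int => /lt_eqF ->.
have rk : r != k%:R.
  apply/negP => /eqP h.
  have ek : e = k%:Z by apply: (intr_inj (R := algC)); rewrite -/r h nat_int.
  rewrite ek in hce; move: hce ck; lia.
have ar : a%:R < r by rewrite -nat_int ltr_int.
have rpos : 0 < r by apply: le_lt_trans ar.
have hrk : (r - a%:R) * r != k%:R.
  have h : (r - a%:R) * r - k%:R =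
      (r^+2 - (a%:R - c%:R) * r - (k%:R - c%:R)) - c%:R * (r + 1) by ring.
  rewrite eq1' sub0r in h.
  rewrite -subr_eq0 h oppr_eq0 mulf_neq0 //; first by rewrite pnatr_eq0.
  by rewrite gt_eqF // ltr_wpDr.
have vN : v \notin nbhd adj v by case: G => [[_ irr] _]; rewrite inE irr.
have cardS : #|v |: nbhd adj v| = k.+1.
  by rewrite cardsU1 vN; case: G => [_ [hk _]]; rewrite hk.
have kn : (k.+1 <= n)%N by rewrite -cardS -[X in (_ <= X)%N]card_ord max_card.
split.
  by rewrite (mult_part _ _ _ _ _ _ v G kn eq1' hc c0 k0 rs' rk) cardS subKn.
exact: (induced_part _ _ _ _ _ _ v G ar hrk).
Qed.
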